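(* Consider the partial-block protocol described in the context, on a finite set of agents $A$ with a connected undirected connectivity graph $G=(A,E)$, and suppose the block length is $L=|A|$. Then a deadlock never occurs: for every epoch $t$ it is not the case that $D(i)$ holds for all $i\in A$.
   Context: Let $A$ be a finite set of agents (agent IDs) and $G=(A,E)$ a connected undirected graph; $\Gamma_i$ denotes the set of neighbors of $i$. Fix an integer $L\ge 1$ (block length). Each agent $i$ maintains a partial block $pb_i\subseteq A$ (a set of agent IDs). The system runs in epochs $t=0,1,2,\dots$; $pb_i^{(t)}$ is agent $i$'s partial block at the start of epoch $t$. In each epoch: (C1) every agent $i$ with $i\notin pb_i$ adds $i$ to $pb_i$; (C2) every agent $i$ sends its $pb_i$ to every neighbor $j\in\Gamma_i$. When an agent $i$ receives a partial block $P$ (from a neighbor or via a direct message) it applies the rule: (R1) if $|P\setminus\{i\}|>|pb_i\setminus\{i\}|$, agent $i$ sets $pb_i:=P$; (R2) otherwise, if $|P\setminus\{i\}|=|pb_i\setminus\{i\}|$ and $P\neq pb_i$, agent $i$ sends its current $pb_i$ directly to every agent in $P\setminus pb_i$, each of which processes it by the same rule; (R3) otherwise the received block is discarded. All received partial blocks are assumed to pass all validity and similarity checks. For an agent $i$ and epoch $t$, the predicate $D(i)$ means: $pb_i^{(t)}=pb_i^{(t+1)}$ and $|pb_i^{(t)}|<L$. A deadlock at epoch $t$ means that $D(i)$ holds for all $i\in A$. *)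

(* Defs.v *)
From mathcomp Require Import all_boot.
Set Implicit Arguments. Unset Strict Implicit. Unset Printing Implicit Defensive.

Section Protocol.
Variable A : finType.

(* A configuration: the partial block pb_i of every agent i. *)
Definition config := {ffun A -> {set A}}.

(* A message in transit: (receiver, partial block carried). *)
Definition msg := (A * {set A})%type.

(* Agent j processes a received partial block P (rules R1, R2, R3).
   Returns the new configuration and the direct messages it sends. *)
Definition process (s : config) (j : A) (P : {set A}) : config * seq msg :=
  let own := s j in
  if #|P :\ j| > #|own :\ j| then ([ffun k => if k == j then P else s k], [::])
  else if (#|P :\ j| == #|own :\ j|) && (P != own)
       then (s, [seq (k, own) | k <- enum (P :\: own)])
       else (s, [::]).

(* run s q s' : starting from configuration s with pending messages q,
   processing the messages one by one in SOME order (any pending message may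
   be delivered next; messages generated by R2 are added to the pool) until no
   message is pending, yields configuration s'. *)
Inductive run : config -> seq msg -> config -> Prop :=
| run_done s : run s [::] s
| run_step s q1 j P q2 s' :
    run (process s j P).1 (q1 ++ q2 ++ (process s j P).2) s' ->
    run s (q1 ++ (j, P) :: q2) s'.

Definition stepC1 (s : config) : config := [ffun i => i |: s i].

Definition initial_msgs (adj : rel A) (s : config) : seq msg :=
  [seq (j, s i) | i <- enum A, j <- [seq j <- enum A | adj i j]].

Definition epoch (adj : rel A) (s s' : config) : Prop :=
  run (stepC1 s) (initial_msgs adj (stepC1 s)) s'.

(* An execution: pb t is the configuration at the start of epoch t. *)
Definition execution (adj : rel A) (pb : nat -> config) : Prop :=
  forall t, epoch adj (pb t) (pb t.+1).

Definition D (L : nat) (pb : nat -> config) (t : nat) (i : A) : Prop :=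
  pb t i = pb t.+1 i /\ #|pb t i| < L.

Definition deadlock (L : nat) (pb : nat -> config) (t : nat) : Prop :=
  forall i : A, D L pb t i.

End Protocol.

(* Main.v *)
Require Import Defs.
From mathcomp Require Import all_boot.
From mathcomp Require Import zify.
Set Implicit Arguments. Unset Strict Implicit. Unset Printing Implicit Defensive.

Section Aux.
Variable A : finType.
Implicit Types (s : config A).

Definition mm s (j : A) := #|s j :\ j|.

Definition good s (x : msg A) : Prop :=
  #|x.2 :\ x.1| <= mm s x.1 /\
  ((#|x.2 :\ x.1| == mm s x.1) && (x.2 != s x.1) ->
    forall k, k \in x.2 :\: s x.1 -> #|s x.1 :\ k| <= mm s k).

Lemma process_mono s j P k : mm s k <= mm (process s j P).1 k.
Proof.
rewrite /process /mm.
case: ifP => [H|_]; last by case: ifP.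
rewrite /= ffunE; case: eqP => [->|//]; exact: ltnW.
Qed.

Lemma run_mono s q s' : run s q s' -> forall k, mm s k <= mm s' k.
Proof.
elim => // {}s q1 j P q2 {}s' _ IH k.
exact: leq_trans (process_mono s j P k) (IH k).
Qed.

Lemma run_stable s q s' : run s q s' -> (forall k, mm s' k <= mm s k) ->
  s' = s /\ forall x, x \in q -> good s x.
Proof.
elim => [{}s _|{}s q1 j P q2 {}s' Hr IH Hle]; first by split.
have Hm := run_mono Hr.
have Hle1 : forall k, mm s' k <= mm (process s j P).1 k.
  move=> k; exact: leq_trans (Hle k) (process_mono s j P k).
have [Hs Hg] := IH Hle1.
move: Hs Hg Hle1 Hle Hm; rewrite /process.
case: ifP => [Hgt|Hngt].
  move=> Hs _ _ Hle _; exfalso.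
  have := Hle j; rewrite Hs /mm /= ffunE eqxx. rewrite /mm in Hgt. lia.
case: ifP => [/andP[Heq Hne]|Hn] /= Hs Hg _ _ _; split => // x.
- rewrite !mem_cat inE => /or3P[H|/eqP->|H]; first 1 [by apply: Hg; rewrite !mem_cat H] ;
    last by apply: Hg; rewrite !mem_cat H !orbT.
  split; rewrite /=; first by rewrite leqNgt Hngt.
  move=> _ k Hk.
  have : (k, s j) \in q1 ++ q2 ++ [seq (k0, s j) | k0 <- enum (P :\: s j)].
    by rewrite !mem_cat; apply/orP; right; apply/orP; right;
       apply/mapP; exists k; rewrite ?mem_enum.
  by move/Hg => [].
- rewrite !mem_cat inE => /or3P[H|/eqP->|H]; first 1 [by apply: Hg; rewrite !mem_cat H] ;
    last by apply: Hg; rewrite !mem_cat H !orbT.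
  split; rewrite /=; first by rewrite leqNgt Hngt.
  by move=> H; rewrite H in Hn.
Qed.

Lemma setU1D1 (X : {set A}) j : (j |: X) :\ j = X :\ j.
Proof. by apply/setP => x; rewrite !inE; case: eqP. Qed.

End Aux.

Theorem theorem1 (A : finType) (adj : rel A)
  (hnonempty : 0 < #|A|)
  (hsym : symmetric adj) (hirr : irreflexive adj)
  (hconn : forall x y : A, connect adj x y)
  (pb : nat -> config A) (hexec : execution adj pb) :
  forall t : nat, ~ deadlock #|A| pb t.
Proof.
move=> t Hd.
set s := pb t.
have Hss : pb t.+1 = s by apply/ffunP => i; have [-> _] := Hd i.
have Hlt : forall i, #|s i| < #|A| by move=> i; have [_ ->] := Hd i.
have Hr := hexec t; rewrite /epoch Hss in Hr.
have Hm1 : forall k, mm s k <= mm (stepC1 s) k.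
  by move=> k; rewrite /mm /stepC1 ffunE setU1D1.
have [Hs1 Hg] := run_stable Hr Hm1.
have Hin : forall i, i \in s i.
  by move=> i; rewrite Hs1 /stepC1 ffunE setU11.
have Hedge : forall i j, adj i j -> good s (j, s i).
  move=> i j aij; rewrite {1}Hs1; apply: Hg.
  rewrite /initial_msgs; apply/allpairsPdep; exists i, j; split.
  - by rewrite mem_enum.
  - by rewrite mem_filter aij mem_enum.
  - by rewrite -Hs1.
have cD : forall (X : {set A}) x, #|X| = (x \in X) + #|X :\ x|.
  by move=> X x; rewrite (cardsD1 x X).
have E1 : forall i j, adj i j -> #|s i| = #|s j|.
  move=> i j aij.
  have [h1 _] := Hedge i j aij.
  have aji : adj j i by rewrite hsym.
  have [h2 _] := Hedge j i aji.
  move: h1 h2; rewrite /mm /=.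
  have := cD (s i) j; have := cD (s j) i; have := cD (s i) i; have := cD (s j) j.
  rewrite !Hin.
  case: (j \in s i); case: (i \in s j) => /=; lia.
have Econ : forall x y, connect adj x y -> #|s x| = #|s y|.
  move=> x y /connectP [p pth ->] {y}.
  elim: p x pth => //= z p IH x /andP [axz pth].
  by rewrite (E1 _ _ axz) IH.
have E2 : forall i j, adj i j -> s i = s j.
  move=> i j aij; apply/eqP; apply/negPn/negP => Hne.
  have [h1 h3] := Hedge i j aij.
  have Hnj : #|s j| = #|s i| by rewrite (E1 _ _ aij).
  have [k Hk] : exists k, k \in s i :\: s j.
    apply/set0Pn; apply/negP; rewrite setD_eq0 => Hsub.
    by rewrite eqEcard Hsub Hnj leqnn in Hne.
  have Hji : j \in s i.
    move: h1; rewrite /mm /=.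
    have := cD (s i) j; have := cD (s j) i; have := cD (s j) j.
    rewrite !Hin. case: (j \in s i) => //=. lia.
  have := h3; rewrite /= /mm.
  move=> h3'.
  have Hkn : k \notin s j by move: Hk; rewrite inE => /andP [].
  have Hc : #|s i :\ j| == #|s j :\ j|.
    apply/eqP; have := cD (s i) j; have := cD (s j) j; rewrite Hin Hji; lia.
  have := h3' (introT andP (conj Hc Hne)) k Hk.
  have := cD (s j) j; have := cD (s j) k; have := cD (s k) k.
  rewrite !Hin (negbTE Hkn) (Econ k j (hconn k j)) /=; lia.
have Econ2 : forall x y, connect adj x y -> s x = s y.
  move=> x y /connectP [p pth ->] {y}.
  elim: p x pth => //= z p IH x /andP [axz pth].
  by rewrite (E2 _ _ axz) IH.
case/card_gt0P: hnonempty => x _.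
have : s x = setT by apply/setP => y; rewrite inE (Econ2 x y (hconn x y)) Hin.
by move=> Hx; have := Hlt x; rewrite Hx cardsT ltnn.
Qed.
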